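(* Consider the discrete first-price auction in the model with ties with $n=2$ bidders whose values are drawn independently and uniformly from $X=\{0,1,\dots,x\}$, where $x\ge10$. If $\beta$ is a symmetric equilibrium, then $\beta(v)=\lfloor v/2\rfloor$ for all $v\in X$. Consequently, if moreover $x$ is even, the auction has no symmetric equilibrium.
   Context: Model. Two risk-neutral bidders compete for one indivisible object. Values and bids lie in $X=\{0,1,2,\dots,x\}$; each bidder's value is drawn independently and uniformly from $X$. A (pure) strategy is a bidding function $\beta:X\to X$. In the model with ties, the higher bidder wins and, if the two bids are equal, each wins with probability $1/2$. In the first-price auction, a bidder with value $v_i$ bidding $b_i$ gets expected payoff $(v_i-b_i)\Pr(i\text{ wins})$. An equilibrium is a profile of bidding functions such that each bidder's bidding function maximises their expected payoff given the other's (a pure-strategy Bayes–Nash equilibrium) and such that no bidder uses a weakly dominated bidding function (a bidding function is weakly dominated if some other bidding function yields at least as high expected payoff against every opponent bidding function, and strictly higher against some). A symmetric equilibrium is an equilibrium in which both bidders use the same bidding function. *)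

(* Defs.v *)
From mathcomp Require Import all_boot all_order all_algebra.
Set Implicit Arguments. Unset Strict Implicit. Unset Printing Implicit Defensive.
Import Order.TTheory GRing.Theory Num.Theory.
Local Open Scope ring_scope.

Definition bidfun (x : nat) := 'I_x.+1 -> 'I_x.+1.

(* Probability that a bid b wins against an opponent using bidding function g
   whose value is uniform on X (ties broken by a fair coin). *)
Definition win_prob (x : nat) (g : bidfun x) (b : 'I_x.+1) : rat :=
  (\sum_(w : 'I_x.+1)
      ((if (nat_of_ord (g w) < nat_of_ord b)%N then 1 else 0)
       + (if nat_of_ord (g w) == nat_of_ord b then 1 / 2 else 0)))
  / (x.+1)%:R.

Definition interim_payoff (x : nat) (g : bidfun x) (v b : 'I_x.+1) : rat :=
  ((nat_of_ord v)%:R - (nat_of_ord b)%:R) * win_prob g b.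

Definition payoff (x : nat) (f g : bidfun x) : rat :=
  (\sum_(v : 'I_x.+1) interim_payoff g v (f v)) / (x.+1)%:R.

Definition best_response (x : nat) (f g : bidfun x) : Prop :=
  forall f' : bidfun x, payoff f' g <= payoff f g.

Definition weakly_dominated (x : nat) (f : bidfun x) : Prop :=
  exists f' : bidfun x,
    (forall g : bidfun x, payoff f g <= payoff f' g) /\
    (exists g : bidfun x, payoff f g < payoff f' g).

Definition equilibrium (x : nat) (f1 f2 : bidfun x) : Prop :=
  [/\ best_response f1 f2, best_response f2 f1,
      ~ weakly_dominated f1 & ~ weakly_dominated f2].

Definition symmetric_equilibrium (x : nat) (b : bidfun x) : Prop :=
  equilibrium b b.

(* Main.v *)
Require Import Defs.
From mathcomp Require Import all_boot all_order all_algebra.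
From mathcomp Require Import zify ring lra.

Section Core.
Variables (x : nat) (bn L : nat -> nat).
Hypothesis hx : 10 <= x.
Hypothesis Br : forall v b, v <= x -> b <= v ->
  (v - b) * (L b + L b.+1) <= (v - bn v) * (L (bn v) + L (bn v).+1).
Hypothesis Sp : forall v, v <= x -> forall b, (bn v < b) = (v < L b).
Hypothesis Lt : forall v, v <= x -> 0 < v -> bn v < v.
Hypothesis B0 : bn 0 = 0.
Hypothesis L0 : L 0 = 0.
Hypothesis Lx : forall b, L b <= x.+1.
Hypothesis Lm : forall a b, a <= b -> L a <= L b.

Lemma bidE v k : v <= x -> L k <= v -> v < L k.+1 -> bn v = k.
Proof.
move=> vx h1 h2.
apply/eqP; rewrite eqn_leq -ltnS Sp // h2 /= leqNgt Sp // -leqNgt h1 //.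
Qed.

Lemma bid_ge v k : v <= x -> L k <= v -> k <= bn v.
Proof. by move=> vx h; rewrite leqNgt Sp // -leqNgt. Qed.

Lemma bid_lt v k : v <= x -> v < L k -> bn v < k.
Proof. by move=> vx h; rewrite Sp. Qed.

Lemma gap v : v <= x -> 1 <= bn v -> L (bn v).-1 = v -> 3 * bn v <= v.
Proof.
move=> vx k1 Lk1.
have v0 : 0 < v by case: v vx k1 Lk1 => //=; rewrite B0.
move: k1 Lk1; set k := bn v => k1 Lk1.
have kv : k < v by exact: Lt.
have Lk : L k = v.
  apply/eqP; rewrite eqn_leq; apply/andP; split.
    by rewrite leqNgt -Sp // ltnn.
  by rewrite -{1}Lk1 Lm // leq_pred.
have Lk1v : v < L k.+1 by rewrite -Sp // ltnSn.
set c := L k.+1 - v.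
have Lk1e : L k.+1 = v + c by rewrite /c subnKC // ltnW.
have c1 : 1 <= c by rewrite /c subn_gt0.
have down := Br v (k.-1) vx (leq_trans (leq_pred k) (ltnW kv)).
rewrite -/k prednK // Lk1 Lk Lk1e in down.
set T := L k.+1 - 1.
have Tx : T <= x by have := Lx k.+1; rewrite /T; lia.
have bT : bn T = k by apply: bidE => //; rewrite /T; lia.
have hT : k.+1 <= T by rewrite /T; lia.
have up := Br T (k.+1) Tx hT.
rewrite bT Lk Lk1e in up.
have L2 : v + c <= L k.+2 by rewrite -Lk1e Lm.
have Te : T = v + c - 1 by rewrite /T Lk1e.
rewrite Te in up.
have [t ve] : exists t, v = k + t by exists (v - k); lia.
have t1 : 1 <= t by lia.
have e1 : v + c - 1 - k.+1 = t + c - 2 by lia.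
have e2 : v + c - 1 - k = t + c - 1 by lia.
have e3 : v - k.-1 = t + 1 by lia.
have e4 : v - k = t by lia.
rewrite e1 e2 in up; rewrite e3 e4 in down.
have up' : (t + c - 2) * (2 * v + 2 * c) <= (t + c - 1) * (2 * v + c).
  have -> : 2 * v + c = v + (v + c) by lia.
  apply: (leq_trans _ up); apply: leq_mul => //; lia.
have dn : 2 * v <= t * c.
  move: down; rewrite !mulnDl !mulnDr !mul1n; lia.
have [u ue] : exists u, t + c = u + 2 by exists (t + c - 2); lia.
have h : u * c <= 2 * v + c.
  have e5 : t + c - 2 = u by lia.
  have e6 : t + c - 1 = u + 1 by lia.
  move: up'; rewrite e5 e6 !mulnDl !mulnDr !mul1n; lia.
have h2 : (t + c) * c <= 2 * v + 3 * c by rewrite ue mulnDl; lia.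
have c3 : c <= 3.
  have : c * c <= 3 * c by move: h2; rewrite mulnDl; lia.
  by rewrite leq_pmul2r.
have : t * c <= t * 3 by rewrite leq_mul2l c3 orbT.
lia.
Qed.


Lemma gapH v j : v <= x -> L j = v -> j < bn v -> 3 * bn v <= v.
Proof.
move=> vx Lj jk; apply: gap => //; first by lia.
apply/eqP; rewrite eqn_leq; apply/andP; split.
  apply: (leq_trans (Lm _ _ (leq_pred _))).
  by rewrite leqNgt -Sp // ltnn.
by rewrite -{1}Lj Lm // -ltnS prednK //; lia.
Qed.

Lemma alg u R c : u * (2 * (R + c)) <= (u + 1) * (R + (R + c)) -> u * c <= 2 * R + c.
Proof. rewrite !mulnDl !mulnDr !mul1n; lia. Qed.

Lemma alg4 m d R : (m + (d + 4) - 2) * (d + 4) <= 2 * R + (d + 4) -> 2 * m + 2 <= R.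
Proof.
rewrite (_ : m + (d + 4) - 2 = m + d + 2); last by lia.
rewrite !mulnDl !mulnDr; lia.
Qed.

Lemma step m : 2 * m.+1 <= x.+1 -> (forall j, j <= m -> L j = 2 * j) -> L m.+1 = 2 * m.+1.
Proof.
move=> hm IH.
have Lmm : L m = 2 * m by apply: IH.
set a := L m.+1.
have a1 : 2 * m <= a by rewrite -Lmm Lm.
have a2 : a <= x.+1 by apply: Lx.
have [e|[e|[e|[e|e]]]] : a = 2 * m \/ a = (2 * m).+1 \/ a = 2 * m.+1 \/ a = (2 * m.+1).+1
   \/ 2 * m + 4 <= a by lia.
-
  have vx : 2 * m <= x by lia.
  have k1 : m < bn (2 * m) by rewrite leqNgt Sp // -/a e ltnn.
  have := gapH _ _ vx Lmm k1; lia.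
-
  have vx : (2 * m).+1 <= x by lia.
  have kge : m < bn (2 * m).+1 by rewrite leqNgt Sp // -/a e ltnn.
  case: (ltnP m.+1 (bn (2 * m).+1)) => kk.
    have := gapH _ _ vx e kk; lia.
  have bk : bn (2 * m).+1 = m.+1 by lia.
  set P := L m.+2.
  have P1 : (2 * m).+1 < P by rewrite -Sp // bk.
  have down := Br _ m vx ltac:(lia).
  rewrite bk Lmm -/a e -/P in down.
  have eA : (2 * m).+1 - m = m + 1 by lia.
  have eB : (2 * m).+1 - m.+1 = m by lia.
  rewrite eA eB in down.
  have P5 : 2 * m + 5 <= P.
    rewrite leqNgt; apply/negP => hP.
    have : m * ((2 * m).+1 + P) <= m * (4 * m + 5) by rewrite leq_mul2l; apply/orP; right; lia.
    move: down; rewrite !mulnDl !mulnDr; lia.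
  have Tx : P - 1 <= x by have := Lx m.+2; rewrite -/P; lia.
  have bT : bn (P - 1) = m.+1 by apply: bidE => //; rewrite -/P -/a; lia.
  have up := Br _ m.+2 Tx ltac:(lia).
  rewrite bT -/a e -/P in up.
  have L3 : P <= L m.+3 by apply: Lm.
  set c := P - (2 * m).+1.
  have Pe : P = (2 * m).+1 + c by rewrite /c; lia.
  have [d de] : exists d, c = d + 4 by exists (c - 4); lia.
  have up2 : (m + c - 2) * (2 * ((2 * m).+1 + c)) <= (m + c - 2 + 1) * ((2 * m).+1 + ((2 * m).+1 + c)).
    rewrite -Pe.
    rewrite (_ : m + c - 2 = P - 1 - m.+2); last by lia.
    rewrite (_ : P - 1 - m.+2 + 1 = P - 1 - m.+1); last by lia.
    apply: leq_trans up; apply: leq_mul => //; lia.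
  have := alg4 m d (2 * m).+1; rewrite -de => /(_ (alg _ _ _ up2)).
  lia.
- by [].
-
  have vx : (2 * m).+2 <= x by lia.
  have bv : bn (2 * m).+2 = m by apply: bidE => //; rewrite ?Lmm -/a; lia.
  have up := Br _ m.+1 vx ltac:(lia).
  rewrite bv Lmm -/a e in up.
  set P := L m.+2 in up.
  have P1 : a <= P by apply: Lm.
  have PP : P = (2 * m.+1).+1.
    apply/eqP; rewrite eqn_leq -e P1 andbT leqNgt; apply/negP => hP.
    have : (m.+1) * ((2 * m.+1).+1 + (2 * m.+1).+2) <= ((2 * m).+2 - m.+1) * ((2 * m.+1).+1 + P).
      rewrite (_ : (2 * m).+2 - m.+1 = m.+1); last by lia.
      by rewrite leq_mul2l; apply/orP; right; lia.
    move=> h; have := leq_trans h up.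
    rewrite (_ : (2 * m).+2 - m = m + 2); last by lia.
    rewrite !mulnDl !mulnDr; lia.
  case: (leqP (2 * m.+1).+1 x) => hx3.
    have kk : m.+1 < bn (2 * m.+1).+1 by rewrite leqNgt Sp // -/P PP ltnn.
    have := gapH _ _ hx3 e kk; lia.
  have m4 : 4 <= m by lia.
  have vx' : (2 * m).-1 <= x by lia.
  have bv' : bn (2 * m).-1 = m.-1.
    apply: bidE => //; rewrite ?prednK ?Lmm ?IH; try lia.
  have dv := Br _ m vx' ltac:(lia).
  have E1 : L m.-1 = 2 * m - 2 by rewrite IH ?leq_pred //; lia.
  have E2 : (m.-1).+1 = m by lia.
  rewrite bv' E2 E1 Lmm -/a e in dv.
  have [n ne] : exists n, m = n + 4 by exists (m - 4); lia.
  have F1 : (2 * m).-1 - m = n + 3 by lia.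
  have F2 : (2 * m).-1 - m.-1 = n + 4 by lia.
  rewrite F1 F2 ne in dv.
  move: dv; rewrite !mulnDl !mulnDr; lia.
-
  have vx : a.-1 <= x by lia.
  have bv : bn a.-1 = m by apply: bidE => //; rewrite ?Lmm -/a; lia.
  have up := Br _ m.+1 vx ltac:(lia).
  rewrite bv Lmm -/a in up.
  have P1 : a <= L m.+2 by apply: Lm.
  set c := a - 2 * m.
  have ae : a = 2 * m + c by rewrite /c; lia.
  have [d de] : exists d, c = d + 4 by exists (c - 4); lia.
  have up2 : (m + c - 2) * (2 * (2 * m + c)) <= (m + c - 2 + 1) * (2 * m + (2 * m + c)).
    rewrite -ae.
    rewrite (_ : m + c - 2 = a.-1 - m.+1); last by lia.
    rewrite (_ : a.-1 - m.+1 + 1 = a.-1 - m); last by lia.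
    apply: leq_trans up; apply: leq_mul => //; lia.
  have := alg4 m d (2 * m); rewrite -de => /(_ (alg _ _ _ up2)).
  lia.
Qed.




Lemma allL m : 2 * m <= x.+1 -> forall j, j <= m -> L j = 2 * j.
Proof.
elim: m => [|m IH] hm j hj.
  by move: hj; rewrite leqn0 => /eqP ->.
have hm' : 2 * m <= x.+1 by lia.
case: (ltnP j m.+1) => jm; first by apply: IH.
have -> : j = m.+1 by lia.
exact: step hm (IH hm').
Qed.

Lemma core : odd x /\ forall v, v <= x -> bn v = v./2.
Proof.
have [M [xe|xe]] : exists M, x = 2 * M \/ x = (2 * M).+1.
  exists x./2; have := odd_double_half x; rewrite -muln2.
  by case: (odd x) => /= h; [right|left]; lia.
- exfalso.
  have LM := allL M ltac:(lia).
  have Lmm : L M = 2 * M by apply: LM.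
  have vx : 2 * M <= x by lia.
  have a1 : 2 * M <= L M.+1 by rewrite -Lmm Lm.
  have a2 : L M.+1 <= (2 * M).+1 by rewrite -xe Lx.
  case: (leqP (L M.+1) (2 * M)) => ha.
    have k1 : M < bn (2 * M) by rewrite leqNgt Sp //; lia.
    have := gapH _ _ vx Lmm k1; lia.
  have bv : bn (2 * M) = M by apply: bidE => //; lia.
  have dv := Br _ M.-1 vx ltac:(lia).
  have eL : L M.+1 = (2 * M).+1 by lia.
  have E1 : L M.-1 = 2 * M - 2 by rewrite LM ?leq_pred //; lia.
  have E2 : (M.-1).+1 = M by lia.
  rewrite bv E2 E1 Lmm eL in dv.
  have [n ne] : exists n, M = n + 5 by exists (M - 5); lia.
  have F1 : 2 * M - M.-1 = n + 6 by lia.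
  have F2 : 2 * M - M = n + 5 by lia.
  rewrite F1 F2 ne in dv.
  move: dv; rewrite !mulnDl !mulnDr; lia.
- split; first by rewrite xe /= mul2n odd_double.
  have LM := allL M.+1 ltac:(lia).
  move=> v vx; have h := odd_double_half v; rewrite -muln2 in h.
  have hv : v./2 <= M by case: (odd v) h => /= h; lia.
  apply: bidE => //; rewrite !LM; case: (odd v) h => /= h; lia.
Qed.
End Core.
Set Implicit Arguments. Unset Strict Implicit. Unset Printing Implicit Defensive.
Import Order.TTheory GRing.Theory Num.Theory.
Local Open Scope ring_scope.

Definition Lc (x : nat) (g : bidfun x) (b : nat) : nat := (\sum_(w : 'I_x.+1) (g w < b : nat))%N.

Lemma wp_eq x (g : bidfun x) b :
  win_prob g b = (Lc g b + Lc g b.+1)%:R / 2 / (x.+1)%:R.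
Proof.
rewrite /win_prob /Lc; congr (_ / _).
rewrite natrD !natr_sum -big_split /= mulr_suml; apply: eq_bigr => w _.
have e : (g w < b.+1)%N = (g w < b)%N || (nat_of_ord (g w) == b) by rewrite ltnS leq_eqVlt orbC.
rewrite e; case: ltngtP => h /=.
- by field.
- by field.
- by field.
Qed.

Definition D x (g : bidfun x) b : nat := (Lc g b + Lc g b.+1)%N.

Lemma wp_ge0 x (g : bidfun x) b : 0 <= win_prob g b.
Proof. by rewrite wp_eq !divr_ge0 ?ler0n. Qed.

Lemma interim_nat x (g : bidfun x) (v b : 'I_x.+1) : (b <= v)%N ->
  interim_payoff g v b = ((v - b) * D g b)%:R / (2 * x.+1)%:R.
Proof.
move=> h; rewrite /interim_payoff wp_eq natrM natrB // natrM /D; field.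
by rewrite (_ : 1 + x%:R = x.+1%:R) ?pnatr_eq0 // -natr1 addrC.
Qed.

Definition upd x (f : bidfun x) (v b : 'I_x.+1) : bidfun x :=
  fun w => if w == v then b else f w.

Lemma payoff_upd x (f g : bidfun x) v b :
  payoff (upd f v b) g = payoff f g + (interim_payoff g v b - interim_payoff g v (f v)) / (x.+1)%:R.
Proof.
rewrite /payoff (bigD1 v) //= [in RHS](bigD1 v) //= /upd eqxx.
rewrite (eq_bigr (fun w => interim_payoff g w (f w))); last by move=> w /negbTE ->.
by rewrite mulrDl mulrDl mulrBl; ring.
Qed.

Lemma br_point x (f g : bidfun x) v b : best_response f g ->
  interim_payoff g v b <= interim_payoff g v (f v).
Proof.
move=> h; have := h (upd f v b); rewrite payoff_upd gerDl.
by rewrite pmulr_lle0 ?invr_gt0 ?ltr0n // subr_le0.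
Qed.

Lemma br_nat x (f g : bidfun x) (v b : 'I_x.+1) : best_response f g ->
  (b <= v)%N -> (f v <= v)%N -> ((v - b) * D g b <= (v - f v) * D g (f v))%N.
Proof.
move=> h hb hf; have := br_point v b h; rewrite !interim_nat //.
by rewrite ler_pM2r ?invr_gt0 ?ltr0n // ler_nat.
Qed.

Definition g0 x : bidfun x := fun _ => @ord0 x.
Arguments g0 : clear implicits.

Lemma Lc_g0 x b : (0 < b)%N -> Lc (g0 x) b = x.+1.
Proof.
move=> hb; rewrite /Lc (eq_bigr (fun _ => 1%N)) ?sum1_card ?card_ord //.
by move=> w _; rewrite /g0 /= hb.
Qed.

Lemma nd0 x (f : bidfun x) : ~ weakly_dominated f -> nat_of_ord (f ord0) = 0%N.
Proof.
move=> nd; apply/eqP; rewrite -leqn0 leqNgt; apply/negP => hb; apply: nd.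
have i0 : forall g : bidfun x, interim_payoff g ord0 ord0 = 0 by move=> g; rewrite /interim_payoff subrr mul0r.
exists (upd f ord0 ord0); split.
  move=> g; rewrite payoff_upd lerDl i0 sub0r.
  rewrite mulr_ge0 ?invr_ge0 ?ler0n // oppr_ge0 /interim_payoff /= sub0r mulNr oppr_le0.
  by rewrite mulr_ge0 ?ler0n ?wp_ge0.
exists (g0 x); rewrite payoff_upd ltrDl i0 sub0r.
rewrite mulr_gt0 ?invr_gt0 ?ltr0n // oppr_gt0 /interim_payoff /= sub0r mulNr oppr_lt0.
rewrite wp_eq /D !Lc_g0 //; apply: mulr_gt0; first by rewrite ltr0n.
by rewrite !divr_gt0 ?ltr0n.
Qed.

Lemma ndv x (f : bidfun x) (v : 'I_x.+1) : ~ weakly_dominated f -> (0 < v)%N -> (f v < v)%N.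
Proof.
move=> nd v0; rewrite ltnNge; apply/negP => hb; apply: nd.
set b' : 'I_x.+1 := inord v.-1.
have vb' : nat_of_ord b' = v.-1 by rewrite /b' inordK // (leq_ltn_trans (leq_pred _) (ltn_ord v)).
have i1 : forall g : bidfun x, interim_payoff g v b' = win_prob g b'.
  move=> g; rewrite /interim_payoff vb' -natrB ?leq_pred // (_ : (v - v.-1)%N = 1%N) ?mul1r //; lia.
have i2 : forall g : bidfun x, interim_payoff g v (f v) <= 0.
  move=> g; rewrite /interim_payoff mulr_le0_ge0 ?wp_ge0 // subr_le0 ler_nat //.
exists (upd f v b'); split.
  move=> g; rewrite payoff_upd lerDl i1.
  by rewrite mulr_ge0 ?invr_ge0 ?ler0n // subr_ge0 (le_trans (i2 g) (wp_ge0 _ _)).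
exists (g0 x); rewrite payoff_upd ltrDl i1.
rewrite mulr_gt0 ?invr_gt0 ?ltr0n // subr_gt0 (le_lt_trans (i2 _)) //.
rewrite wp_eq /D [Lc _ b'.+1]Lc_g0 //; apply: mulr_gt0; last by rewrite invr_gt0 ltr0n.
by rewrite divr_gt0 // ltr0n addn_gt0 orbT.
Qed.

Local Open Scope nat_scope.

Lemma Lc_mono x (g : bidfun x) a b : a <= b -> Lc g a <= Lc g b.
Proof.
move=> ab; apply: leq_sum => w _.
by case: (ltnP (g w) a) => h //=; rewrite (leq_trans h ab).
Qed.

Lemma Lc_le x (g : bidfun x) b : Lc g b <= x.+1.
Proof.
apply: (@leq_trans (\sum_(w : 'I_x.+1) 1)); last by rewrite sum1_card card_ord.
apply: leq_sum => w _; by case: (_ < _).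
Qed.

Lemma Lc0 x (g : bidfun x) : Lc g 0 = 0.
Proof. by rewrite /Lc big1. Qed.

Lemma Lc_strict x (g : bidfun x) w : Lc g (g w) < Lc g (g w).+1.
Proof.
rewrite /Lc (bigD1 w) //= [X in _ < X](bigD1 w) //= ltnn ltnSn add0n add1n ltnS.
apply: leq_sum => i _; rewrite ltnS; case: ltnP => //= h.
by rewrite (ltnW h).
Qed.

Lemma mono x (f : bidfun x) : best_response f f -> ~ weakly_dominated f ->
  forall v v' : 'I_x.+1, v <= v' -> f v <= f v'.
Proof.
move=> br nd v v' vv'; rewrite leqNgt; apply/negP => lt.
have fle : forall w : 'I_x.+1, f w <= w.
  move=> w; case: (posnP w) => w0; last by apply: ltnW; apply: ndv.
  have -> : w = ord0 by apply: val_inj.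
  by rewrite nd0.
have vlt : v < v'.
  rewrite ltn_neqAle vv' andbT; apply/negP => /eqP e.
  have ee : v = v' by apply: val_inj.
  by rewrite ee ltnn in lt.
have h1 := br_nat (v:=v) (b:=f v') br (leq_trans (ltnW lt) (fle v)) (fle v).
have h2 := br_nat (v:=v') (b:=f v) br (leq_trans (fle v) vv') (fle v').
have DD : D f (f v') < D f (f v).
  rewrite /D; have := Lc_strict f v; have := Lc_mono f lt; have := Lc_mono f (leqnSn (f v')).
  lia.
set X := D f (f v) in DD h1 h2; set Y := D f (f v') in DD h1 h2.
have [p pe] : exists p, nat_of_ord v = f v + p by exists (v - f v); have := fle v; lia.
have [d de] : exists d, nat_of_ord v' = v + d.+1 by exists (v' - v).-1; lia.
have [e ee] : exists e, nat_of_ord (f v) = f v' + e.+1 by exists (f v - f v').-1; lia.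
have E1 : v - f v' = p + e.+1 by clear h1 h2 DD; lia.
have E2 : v - f v = p by clear h1 h2 DD; lia.
have E3 : v' - f v = p + d.+1 by clear h1 h2 DD; lia.
have E4 : v' - f v' = p + d.+1 + e.+1 by clear h1 h2 DD; lia.
rewrite E1 E2 in h1; rewrite E3 E4 in h2.
have dX : d.+1 * Y < d.+1 * X by rewrite ltn_pmul2l.
move: h1 h2 dX; rewrite !mulnDl.
clear -x; lia.
Qed.

Lemma downsum (P : nat -> bool) n : (forall i j, i <= j < n -> P j -> P i) ->
  \sum_(k < n) P k <= n /\ forall i, i < n -> P i = (i < \sum_(k < n) P k).
Proof.
elim: n => [|n IH] dc; first by rewrite big_ord0.
have dc' : forall i j, i <= j < n -> P j -> P i by move=> i j h; apply: dc; lia.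
have [IH1 IH2] := IH dc'.
rewrite big_ord_recr /=.
case Pn: (P n).
  have allP : forall i, i <= n -> P i by move=> i hi; apply: (dc i n); rewrite ?hi ?ltnSn ?Pn.
  have sn : \sum_(i < n) P i = n.
    apply/eqP; rewrite eqn_leq IH1 /=; case: (posnP n) => [n0|n0].
      by rewrite n0 big_ord0.
    have hn : n.-1 < n by rewrite prednK.
    have := IH2 _ hn; rewrite allP ?leq_pred // => /esym h.
    move: h; case: (n) n0 => // n1 _ /=; done.
  rewrite sn; split; first by rewrite addn1.
  by move=> i hi; rewrite allP ?addn1 // -ltnS.
rewrite /= addn0; split; first by apply: (leq_trans IH1).
move=> i; rewrite ltnS leq_eqVlt => /orP [/eqP -> |hi]; first by rewrite Pn ltnNge IH1.
exact: IH2.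
Qed.

Lemma spec x (f : bidfun x) : (forall v v' : 'I_x.+1, v <= v' -> f v <= f v') ->
  forall (w : 'I_x.+1) b, (f w < b) = (w < Lc f b).
Proof.
move=> mo w b.
pose P k := f (inord k) < b.
have eL : Lc f b = \sum_(k < x.+1) P k.
  by apply: eq_bigr => k _; rewrite /P inord_val.
have dc : forall i j, i <= j < x.+1 -> P j -> P i.
  move=> i j /andP [ij jx]; rewrite /P => h; apply: leq_ltn_trans h; apply: mo.
  by rewrite !inordK //; apply: leq_ltn_trans jx.
have [_ H] := downsum dc.
by rewrite eL -H // /P inord_val.
Qed.

Lemma key x (f : bidfun x) : (10 <= x)%N -> symmetric_equilibrium f ->
  odd x /\ forall v : 'I_x.+1, nat_of_ord (f v) = v./2.
Proof.
move=> hx [br _ nd _].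
have mo := mono br nd.
have fle : forall w : 'I_x.+1, f w <= w.
  move=> w; case: (posnP w) => w0; last by apply: ltnW; apply: ndv.
  have -> : w = ord0 by apply: val_inj.
  by rewrite nd0.
pose bn v := nat_of_ord (f (inord v)).
have bnE : forall v : 'I_x.+1, bn v = f v by move=> v; rewrite /bn inord_val.
have [o H] : odd x /\ forall v, v <= x -> bn v = v./2.
{ apply: (@core x bn (Lc f) hx).
  - move=> v b vx bv.
  have := br_nat (v := inord v) (b := inord b) br.
  rewrite !inordK ?bnE; try lia.
  move=> h; apply: h => //.
  by rewrite -[X in _ <= X](@inordK x v) // fle.
- by move=> v vx b; rewrite /bn spec // inordK.
- move=> v vx v0; rewrite /bn /=.
  have := ndv (v := inord v) nd; rewrite inordK //; by apply.
- rewrite /bn /= (_ : inord 0 = ord0 :> 'I_x.+1); first by rewrite nd0.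
  by apply: val_inj; rewrite /= inordK.
- exact: Lc0.
- exact: Lc_le.
- by move=> a b ab; apply: Lc_mono. }
split=> // v; rewrite -bnE; apply: H.
by rewrite -ltnS.
Qed.

Theorem mainTheorem20 (x : nat) (hx : (10 <= x)%N) :
  (forall b : bidfun x, symmetric_equilibrium b ->
     forall v : 'I_x.+1, nat_of_ord (b v) = (nat_of_ord v)./2)
  /\ (~~ odd x -> forall b : bidfun x, ~ symmetric_equilibrium b).
Proof.
split.
  by move=> b h v; have [_ ->] := key hx h.
by move=> ev b h; have [o _] := key hx h; rewrite o in ev.
Qed.
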